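(* Let $n\ge3$ and let $N$ be the normal closure in $FVB_n$ of the subgroup $\langle(\rho_i\sigma_{i+1})^6\mid i=1,\dots,n-2\rangle$. Then $N\le\ker(\theta)\le FVP_n\cap FH_n$.
   Context: $FVB_n$ is the flat virtual braid group: generators $\sigma_1,\dots,\sigma_{n-1},\rho_1,\dots,\rho_{n-1}$, relations $\sigma_i\sigma_j=\sigma_j\sigma_i$, $\rho_i\rho_j=\rho_j\rho_i$, $\sigma_i\rho_j=\rho_j\sigma_i$ for $|i-j|\ge2$; $\sigma_i\sigma_{i+1}\sigma_i=\sigma_{i+1}\sigma_i\sigma_{i+1}$; $\rho_i\rho_{i+1}\rho_i=\rho_{i+1}\rho_i\rho_{i+1}$; $\rho_i\rho_{i+1}\sigma_i=\sigma_{i+1}\rho_i\rho_{i+1}$; $\rho_i^2=\sigma_i^2=1$. $\iota_1:FVB_n\to S_n$ sends $\sigma_i,\rho_i\mapsto(i,i+1)$; $\iota_2:FVB_n\to S_n$ sends $\sigma_i\mapsto1$, $\rho_i\mapsto(i,i+1)$; $FVP_n=\ker\iota_1$, $FH_n=\ker\iota_2$. $F_{2n}$ is free on $x_1,\dots,x_n,y_1,\dots,y_n$ and $\theta:FVB_n\to{\rm Aut}(F_{2n})$ is the homomorphism with $\theta(\sigma_i):x_i\mapsto x_{i+1}y_{i+1},\ x_{i+1}\mapsto x_iy_{i+1}^{-1}$ and $\theta(\rho_i):x_i\leftrightarrow x_{i+1},\ y_i\leftrightarrow y_{i+1}$, other generators fixed; automorphisms compose on the right, $(fg)(x)=g(f(x))$.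 *)

(* Defs.v *)
(* Finitely presented groups are modelled by words and an
   explicitly generated congruence; free groups by words and free reduction. *)
From mathcomp Require Import all_boot all_order all_fingroup.
Set Implicit Arguments. Unset Strict Implicit. Unset Printing Implicit Defensive.

(* A generator is (is_rho, i): (false,i) = sigma_i, (true,i) = rho_i.  *)
(* A letter is (inv, g): inv = true means g^{-1}.                      *)
Definition gen := (bool * nat)%type.
Definition letter := (bool * gen)%type.
Definition word := seq letter.

Definition sig (i : nat) : word := [:: (false, (false, i))].
Definition rho (i : nat) : word := [:: (false, (true, i))].

Definition linv (a : letter) : letter := (~~ a.1, a.2).
Definition winv (w : word) : word := rev (map linv w).

Definition valid_letter (n : nat) (a : letter) : bool := (1 <= a.2.2 <= n.-1).
Definition valid (n : nat) (w : word) : bool := all (valid_letter n) w.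

Inductive fvb_rel (n : nat) : word -> word -> Prop :=
| rel_ss i j : 1 <= i <= n.-1 -> 1 <= j <= n.-1 -> ((i + 2 <= j) || (j + 2 <= i)) ->
    fvb_rel n (sig i ++ sig j) (sig j ++ sig i)
| rel_rr i j : 1 <= i <= n.-1 -> 1 <= j <= n.-1 -> ((i + 2 <= j) || (j + 2 <= i)) ->
    fvb_rel n (rho i ++ rho j) (rho j ++ rho i)
| rel_sr i j : 1 <= i <= n.-1 -> 1 <= j <= n.-1 -> ((i + 2 <= j) || (j + 2 <= i)) ->
    fvb_rel n (sig i ++ rho j) (rho j ++ sig i)
| rel_sss i : 1 <= i <= n.-2 ->
    fvb_rel n (sig i ++ sig i.+1 ++ sig i) (sig i.+1 ++ sig i ++ sig i.+1)
| rel_rrr i : 1 <= i <= n.-2 ->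
    fvb_rel n (rho i ++ rho i.+1 ++ rho i) (rho i.+1 ++ rho i ++ rho i.+1)
| rel_rrs i : 1 <= i <= n.-2 ->
    fvb_rel n (rho i ++ rho i.+1 ++ sig i) (sig i.+1 ++ rho i ++ rho i.+1)
| rel_r2 i : 1 <= i <= n.-1 -> fvb_rel n (rho i ++ rho i) [::]
| rel_s2 i : 1 <= i <= n.-1 -> fvb_rel n (sig i ++ sig i) [::].

Inductive fvb_eqv (n : nat) : word -> word -> Prop :=
| eqv_refl u : fvb_eqv n u u
| eqv_sym u v : fvb_eqv n u v -> fvb_eqv n v u
| eqv_trans u v w : fvb_eqv n u v -> fvb_eqv n v w -> fvb_eqv n u w
| eqv_ctx a b u v : valid n a -> valid n b ->
    fvb_eqv n u v -> fvb_eqv n (a ++ u ++ b) (a ++ v ++ b)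
| eqv_cancel x : valid_letter n x -> fvb_eqv n [:: x; linv x] [::]
| eqv_rel u v : fvb_rel n u v -> fvb_eqv n u v.

Fixpoint wpow (w : word) (k : nat) : word :=
  if k is k'.+1 then w ++ wpow w k' else [::].

Definition relator6 (i : nat) : word := wpow (rho i ++ sig i.+1) 6.

Inductive inN (n : nat) : word -> Prop :=
| N_gen i : 1 <= i <= n.-2 -> inN n (relator6 i)
| N_one : inN n [::]
| N_mul u v : inN n u -> inN n v -> inN n (u ++ v)
| N_inv u : inN n u -> inN n (winv u)
| N_conj g u : valid n g -> inN n u -> inN n (g ++ u ++ winv g)
| N_eqv u v : fvb_eqv n u v -> inN n u -> inN n v.

(* k in {1..n} is the ordinal k-1.                                      *)
Definition transp (n i : nat) : {perm 'I_n} :=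
  match @insub nat (fun k => k < n) _ i.-1, @insub nat (fun k => k < n) _ i with
  | Some a, Some b => tperm a b
  | _, _ => 1%g
  end.

Definition gen_perm1 (n : nat) (g : gen) : {perm 'I_n} := transp n g.2.
Definition gen_perm2 (n : nat) (g : gen) : {perm 'I_n} :=
  if g.1 then transp n g.2 else 1%g.

Definition word_perm (n : nat) (f : gen -> {perm 'I_n}) (w : word) : {perm 'I_n} :=
  foldr (fun a p => ((if a.1 then (f a.2)^-1 else f a.2) * p)%g) 1%g w.

Definition iota1 (n : nat) (w : word) : {perm 'I_n} := word_perm (gen_perm1 n) w.
Definition iota2 (n : nat) (w : word) : {perm 'I_n} := word_perm (gen_perm2 n) w.

(* A variable is (is_y, j); a free letter is (inv, var).               *)
Definition var := (bool * nat)%type.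
Definition fletter := (bool * var)%type.
Definition fword := seq fletter.

Definition X (j : nat) : fletter := (false, (false, j)).
Definition Y (j : nat) : fletter := (false, (true, j)).
Definition Yinv (j : nat) : fletter := (true, (true, j)).

(* free reduction; two words represent the same element of F_{2n} iff
   their reductions coincide *)
Definition fred (w : fword) : fword :=
  foldr (fun a acc => match acc with
                      | b :: r => if (a.2 == b.2) && (a.1 != b.1) then r else a :: acc
                      | [::] => [:: a] end) [::] w.

Definition finv (w : fword) : fword := rev (map (fun l : fletter => (~~ l.1, l.2)) w).

Definition fsubst (f : var -> fword) (w : fword) : fword :=
  flatten (map (fun l : fletter => if l.1 then finv (f l.2) else f l.2) w).

Definition theta_sigma (i : nat) (v : var) : fword :=
  if ~~ v.1 && (v.2 == i) then [:: X i.+1; Y i.+1]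
  else if ~~ v.1 && (v.2 == i.+1) then [:: X i; Yinv i.+1]
  else [:: (false, v)].

Definition theta_rho (i : nat) (v : var) : fword :=
  if v.2 == i then [:: (false, (v.1, i.+1))]
  else if v.2 == i.+1 then [:: (false, (v.1, i))]
  else [:: (false, v)].

Definition theta_gen (g : gen) : var -> fword :=
  if g.1 then theta_rho g.2 else theta_sigma g.2.

(* theta(sigma_i) and theta(rho_i) are involutions of F_{2n}, so
   theta(g^{-1}) = theta(g)^{-1} = theta(g). *)
Definition theta_letter (a : letter) : var -> fword := theta_gen a.2.

(* automorphisms compose on the right: theta(a_1 ... a_k)(v)
   = theta(a_k)( ... theta(a_1)(v) ...). *)
Definition theta (w : word) (v : var) : fword :=
  foldl (fun u a => fsubst (theta_letter a) u) [:: (false, v)] w.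

Definition in_ker_theta (n : nat) (w : word) : Prop :=
  forall (b : bool) (j : nat), 1 <= j <= n -> fred (theta w (b, j)) = [:: (false, (b, j))].

(* Main.v *)
Require Import Defs.
Set Implicit Arguments. Unset Strict Implicit. Unset Printing Implicit Defensive.
From mathcomp Require Import all_boot all_order all_fingroup.
From mathcomp Require Import zify.
Import Defs.


Definition fpush (a : fletter) (acc : fword) : fword :=
  match acc with
  | b :: r => if (a.2 == b.2) && (a.1 != b.1) then r else a :: acc
  | [::] => [:: a] end.

Lemma fred_cons a u : fred (a :: u) = fpush a (fred u).
Proof. by []. Qed.
Lemma fred_nil : fred [::] = [::]. Proof. by []. Qed.

Definition canc (a b : fletter) := (a.2 == b.2) && (a.1 != b.1).
Definition finvl (a : fletter) : fletter := (~~ a.1, a.2).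

Fixpoint red (w : fword) : bool :=
  match w with
  | a :: ((b :: _) as r) => ~~ canc a b && red r
  | _ => true end.

Lemma red_tail a r : red (a :: r) -> red r.
Proof. by case: r => //= b r /andP[]. Qed.

Lemma red_push a r : red r -> red (fpush a r).
Proof.
case: r => [|b r] //= Hr.
case: ifP => H; first by apply: red_tail Hr.
by rewrite /= /canc H.
Qed.

Lemma red_fred u : red (fred u).
Proof. by elim: u => //= a u IH; apply: red_push. Qed.

Lemma canc_inv a b : canc a b -> b = finvl a.
Proof.
case: a b => [a1 a2] [b1 b2] /andP[/= /eqP -> H].
by case: a1 b1 H => [] [].
Qed.

Lemma push_inv a r : red r -> fpush a (fpush (finvl a) r) = r.
Proof.
case: a => a1 a2.
case: r => [|b r] /=.
  by rewrite eqxx; case: a1.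
case: ifP => H.
  have Hb : b = (a1, a2).
    by rewrite (canc_inv (a:=(~~a1,a2)) H) /finvl /= negbK.
  subst b. case: r => [|c r] //= /andP[Hc _].
  by move: Hc; rewrite /canc /= => /negbTE ->.
by rewrite /= eqxx; case: a1 H.
Qed.

Lemma fred_red r : red r -> fred r = r.
Proof.
elim: r => //= a r IH Hr.
rewrite IH; last by apply: red_tail Hr.
case: r Hr {IH} => //= b r /andP[H _].
by move: H; rewrite /canc => /negbTE ->.
Qed.

Lemma red_foldr r s : red r -> red (foldr fpush r s).
Proof. by move=> Hr; elim: s => //= a s IH; apply: red_push. Qed.

Lemma foldr_push r a s : red r ->
  foldr fpush r (fpush a s) = fpush a (foldr fpush r s).
Proof.
move=> Hr; case: s => [|b s] //=.
case: ifP => H //.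
have -> : b = finvl a by apply: canc_inv.
by rewrite push_inv //; apply: red_foldr.
Qed.

Lemma fred_cat u v : fred (u ++ v) = foldr fpush (fred v) u.
Proof. by rewrite /fred foldr_cat. Qed.

Lemma foldr_fred r u : red r -> foldr fpush r u = foldr fpush r (fred u).
Proof.
move=> Hr; elim: u => //= a u IH.
by rewrite IH -foldr_push.
Qed.

Lemma fred_catl u v : fred (u ++ v) = fred (fred u ++ v).
Proof. by rewrite !fred_cat -foldr_fred //; apply: red_fred. Qed.

Lemma fred_catr u v : fred (u ++ v) = fred (u ++ fred v).
Proof. by rewrite !fred_cat (fred_red (red_fred v)). Qed.

Definition FE (u v : fword) := fred u = fred v.

Lemma E_cat u u' v v' : FE u u' -> FE v v' -> FE (u ++ v) (u' ++ v').
Proof.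
rewrite /FE => H1 H2.
by rewrite fred_catl H1 -fred_catl fred_catr H2 -fred_catr.
Qed.

Lemma finv_cat u v : finv (u ++ v) = finv v ++ finv u.
Proof. by rewrite /finv map_cat rev_cat. Qed.

Lemma finvK u : finv (finv u) = u.
Proof.
rewrite /finv map_rev revK -map_comp map_id_in // => -[b x] _ /=.
by rewrite negbK.
Qed.

Lemma finv_cons a u : finv (a :: u) = finv u ++ [:: finvl a].
Proof. by rewrite /finv /= rev_cons cats1. Qed.

Lemma fred_finv_r x : fred (x ++ finv x) = [::].
Proof.
elim: x => //= a x IH.
rewrite finv_cons catA fred_catl IH /=.
by case: a => [[] v] /=; rewrite eqxx.
Qed.

Lemma fred_finv_l x : fred (finv x ++ x) = [::].
Proof. by rewrite -{2}(finvK x) fred_finv_r. Qed.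

Lemma E_finv u v : FE u v -> FE (finv u) (finv v).
Proof.
rewrite /FE => H.
have -> : fred (finv u) = fred (finv u ++ (v ++ finv v)).
  by rewrite fred_catr fred_finv_r cats0.
rewrite catA fred_catl (fred_catr (finv u) v) -H -fred_catr fred_finv_l.
by [].
Qed.

Lemma fsubst_cat f u v : fsubst f (u ++ v) = fsubst f u ++ fsubst f v.
Proof. by rewrite /fsubst map_cat flatten_cat. Qed.

Lemma fsubst_cons f a u : fsubst f (a :: u) =
  (if a.1 then finv (f a.2) else f a.2) ++ fsubst f u.
Proof. by []. Qed.

Lemma fsubst_finv f u : fsubst f (finv u) = finv (fsubst f u).
Proof.
elim: u => [|a u IH] //.
rewrite finv_cons fsubst_cat IH fsubst_cons finv_cat /= cats0.
by case: a => [[] v] /=; rewrite ?finvK.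
Qed.

Lemma fsubst_comp g f u :
  fsubst g (fsubst f u) = fsubst (fun v => fsubst g (f v)) u.
Proof.
elim: u => [|a u IH] //.
rewrite !fsubst_cons fsubst_cat IH.
by case: a.1; rewrite ?fsubst_finv.
Qed.

Lemma fsubst_id u : fsubst (fun v => [:: (false, v)]) u = u.
Proof. by elim: u => [|[[] v] u IH] //; rewrite fsubst_cons IH. Qed.

Lemma E_refl u : FE u u. Proof. by []. Qed.
Lemma E_sym u v : FE u v -> FE v u. Proof. by []. Qed.
Lemma E_trans u v w : FE u v -> FE v w -> FE u w.
Proof. by rewrite /FE => ->. Qed.

Lemma fred_fsubst_push f a s :
  fred (fsubst f (fpush a s)) = fred (fsubst f (a :: s)).
Proof.
case: s => [|b s] //=.
case: ifP => H //.
have Hb := canc_inv H; subst b.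
rewrite fsubst_cons [fsubst f (_ :: _)]fsubst_cons catA fred_catl.
case: a {H} => [[] v] /=.
  by rewrite fred_finv_l.
by rewrite fred_finv_r.
Qed.

Lemma fred_fsubst f u : fred (fsubst f u) = fred (fsubst f (fred u)).
Proof.
elim: u => [|a u IH] //.
rewrite fred_cons fred_fsubst_push !fsubst_cons.
by rewrite fred_catr IH -fred_catr.
Qed.

Lemma E_fsubst_arg f u v : FE u v -> FE (fsubst f u) (fsubst f v).
Proof. by rewrite /FE => H; rewrite fred_fsubst H -fred_fsubst. Qed.

Lemma E_fsubst_fun f g u : (forall v, FE (f v) (g v)) -> FE (fsubst f u) (fsubst g u).
Proof.
move=> H; elim: u => [|a u IH]; first by [].
rewrite !fsubst_cons; apply: E_cat => //.
by case: a.1 => //; apply: E_finv.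
Qed.


Lemma fsubst_ext f g u : (forall v, f v = g v) -> fsubst f u = fsubst g u.
Proof. by move=> H; elim: u => [|a u IH] //; rewrite !fsubst_cons IH H. Qed.

Definition step (u : fword) (a : letter) := fsubst (theta_letter a) u.

Lemma theta_fold w u : foldl step u w = fsubst (theta w) u.
Proof.
elim: w u => [|a w IH] u /=; first by rewrite fsubst_id.
rewrite IH fsubst_comp; apply: fsubst_ext => v.
by rewrite /theta /= -/step IH fsubst_cons /= cats0.
Qed.

Lemma theta_cons a w v : theta (a :: w) v = fsubst (theta w) (theta_letter a v).
Proof. by rewrite /theta /= -/step theta_fold fsubst_cons /= cats0. Qed.

Lemma theta_cat u w v : theta (u ++ w) v = fsubst (theta w) (theta u v).
Proof. by rewrite /theta foldl_cat -/step theta_fold. Qed.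

Lemma theta_nil v : theta [::] v = [:: (false, v)].
Proof. by []. Qed.

Ltac brute :=
  repeat (first
    [ progress (rewrite /fsubst /finv /= ?eqxx /=)
    | match goal with |- context [@eq_op _ ?a ?b] =>
        let T := type of a in unify T nat;
        case: (eqVneq a b) => ?; [ first [ exfalso; lia | subst | idtac ] | idtac ]
      end ]).

Lemma invol a v : FE (fsubst (theta_letter a) (theta_letter a v)) [:: (false, v)].
Proof.
case: a => b [[] i]; case: v => [[] m]; rewrite /FE /theta_letter /theta_gen /=;
 rewrite /theta_rho /theta_sigma; brute.
all: try (exfalso; lia); try reflexivity.
Qed.


Ltac unf := rewrite /FE /theta /= /theta_letter /theta_gen /= /theta_rho /theta_sigma.

Lemma rel_sss_ok i v : FE (theta (sig i ++ sig i.+1 ++ sig i) v) (theta (sig i.+1 ++ sig i ++ sig i.+1) v).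
Proof.
case: v => [[] m]; unf; brute.
all: try (exfalso; lia); try reflexivity.
Qed.

Lemma rel_rrr_ok i v : FE (theta (rho i ++ rho i.+1 ++ rho i) v) (theta (rho i.+1 ++ rho i ++ rho i.+1) v).
Proof.
case: v => [[] m]; unf; brute.
all: try (exfalso; lia); try reflexivity.
Qed.

Lemma rel_rrs_ok i v : FE (theta (rho i ++ rho i.+1 ++ sig i) v) (theta (sig i.+1 ++ rho i ++ rho i.+1) v).
Proof.
case: v => [[] m]; unf; brute.
all: try (exfalso; lia); try reflexivity.
Qed.

Lemma rel_ss_ok i j v : (i + 2 <= j) || (j + 2 <= i) ->
  FE (theta (sig i ++ sig j) v) (theta (sig j ++ sig i) v).
Proof.
move=> Hij; case: v => [[] m]; unf; brute.
all: try (exfalso; lia); try reflexivity.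
Qed.

Lemma rel_rr_ok i j v : (i + 2 <= j) || (j + 2 <= i) ->
  FE (theta (rho i ++ rho j) v) (theta (rho j ++ rho i) v).
Proof.
move=> Hij; case: v => [[] m]; unf; brute.
all: try (exfalso; lia); try reflexivity.
Qed.

Lemma rel_sr_ok i j v : (i + 2 <= j) || (j + 2 <= i) ->
  FE (theta (sig i ++ rho j) v) (theta (rho j ++ sig i) v).
Proof.
move=> Hij; case: v => [[] m]; unf; brute.
all: try (exfalso; lia); try reflexivity.
Qed.

Definition fsh k (a : fletter) : fletter := (a.1, (a.2.1, a.2.2 + k)).
Definition lsh k (a : letter) : letter := (a.1, (a.2.1, a.2.2 + k)).
Definition vsh k (v : var) : var := (v.1, v.2 + k).

Lemma theta_letter_sh k a v :
  theta_letter (lsh k a) (vsh k v) = map (fsh k) (theta_letter a v).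
Proof.
case: a => s [[] i]; case: v => [b m];
rewrite /theta_letter /theta_gen /theta_rho /theta_sigma /= -!addSn !eqn_add2r;
by repeat case: ifP => //=.
Qed.

Lemma finv_map k x : finv (map (fsh k) x) = map (fsh k) (finv x).
Proof. by rewrite /finv map_rev -!map_comp. Qed.

Lemma fsubst_sh k f g u : (forall v, g (vsh k v) = map (fsh k) (f v)) ->
  fsubst g (map (fsh k) u) = map (fsh k) (fsubst f u).
Proof.
move=> H; elim: u => [|[s v] u IH] //=.
rewrite fsubst_cons /= [fsubst f _]fsubst_cons map_cat IH /=.
have -> : (v.1, v.2 + k) = vsh k v by [].
by rewrite H; case: s => //; rewrite finv_map.
Qed.

Lemma theta_sh k w v : theta (map (lsh k) w) (vsh k v) = map (fsh k) (theta w v).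
Proof.
elim: w v => [|a w IH] v //=.
rewrite !theta_cons theta_letter_sh; apply: fsubst_sh => u; exact: IH.
Qed.

Lemma fpush_sh k a r : fpush (fsh k a) (map (fsh k) r) = map (fsh k) (fpush a r).
Proof.
case: r => [|b r] //=.
case: a b => [s [c m]] [s' [c' m']] /=.
rewrite !xpair_eqE eqn_add2r.
by case: ifP.
Qed.

Lemma fred_sh k u : fred (map (fsh k) u) = map (fsh k) (fred u).
Proof. by elim: u => [|a u IH] //=; rewrite -fpush_sh -IH. Qed.

Lemma theta_far w v :
  all (fun a : letter => (v.2 != a.2.2) && (v.2 != a.2.2.+1)) w -> theta w v = [:: (false, v)].
Proof.
elim: w => [|a w IH] //= /andP[/andP[H1 H2] Hw].
rewrite theta_cons.
have -> : theta_letter a v = [:: (false, v)].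
  case: a H1 H2 => s [[] i]; case: v {IH Hw} => b m /= H1 H2;
  rewrite /theta_letter /theta_gen /theta_rho /theta_sigma /= (negbTE H1) (negbTE H2) //.
  by rewrite andbF.
by rewrite fsubst_cons /= cats0 IH.
Qed.

Lemma relator_ker i v : 1 <= i -> FE (theta (relator6 i) v) [:: (false, v)].
Proof.
move=> Hi; case: v => b m.
have Hr : relator6 i = map (lsh i.-1) (relator6 1).
  by case: i Hi.
have key d m' : d < 3 -> m' = d.+1 + i.-1 ->
   FE (theta (relator6 i) (b, m')) [:: (false, (b, m'))].
  move=> Hd ->.
  rewrite /FE Hr (theta_sh i.-1 (relator6 1) (b, d.+1)) fred_sh.
  by case: d Hd => [|[|[|]]] //; case: b.
have [H|H] := boolP ((m == i) || (m == i.+1) || (m == i.+2)).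
  case/orP: H => [/orP[]|] /eqP ->.
  - by apply: (key 0) => //; lia.
  - by apply: (key 1) => //; lia.
  - by apply: (key 2) => //; lia.
rewrite theta_far //.
rewrite /relator6 /=; move: H.
by case: (m == i); case: (m == i.+1); case: (m == i.+2).
Qed.


Definition K w := forall v, FE (theta w v) [:: (false, v)].
Definition ME u w := forall v, FE (theta u v) (theta w v).

Lemma ME_cat u u' w w' : ME u u' -> ME w w' -> ME (u ++ w) (u' ++ w').
Proof.
move=> H1 H2 v; rewrite !theta_cat.
apply: E_trans (E_fsubst_arg _ (H1 v)) _.
exact: E_fsubst_fun.
Qed.

Lemma Kl u w : K u -> ME (u ++ w) w.
Proof.
move=> H v; rewrite theta_cat.
apply: E_trans (E_fsubst_arg _ (H v)) _.
by rewrite fsubst_cons /= cats0.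
Qed.

Lemma ME_sym u w : ME u w -> ME w u.
Proof. by move=> H v; apply: E_sym. Qed.

Lemma ME_K u w : ME u w -> K w -> K u.
Proof. by move=> H1 H2 v; apply: E_trans (H1 v) (H2 v). Qed.

Lemma theta1 a v : theta [:: a] v = theta_letter a v.
Proof. by rewrite theta_cons fsubst_id. Qed.

Lemma K2 a b : a.2 = b.2 -> K [:: a; b].
Proof.
move=> H v; rewrite theta_cons.
rewrite (fsubst_ext _ (theta1 b)).
have -> : theta_letter b = theta_letter a by rewrite /theta_letter H.
exact: invol.
Qed.

Lemma K_nil : K [::]. Proof. by []. Qed.

Lemma winv_cons a u : winv (a :: u) = winv u ++ [:: linv a].
Proof. by rewrite /winv /= rev_cons cats1. Qed.

Lemma Kcancel u : K (u ++ winv u).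
Proof.
elim: u => [|a u IH] //.
rewrite winv_cons.
have -> : (a :: u) ++ winv u ++ [:: linv a] = [:: a] ++ ((u ++ winv u) ++ [:: linv a]).
  by rewrite /= catA.
apply: (@ME_K _ ([:: a] ++ [:: linv a])); last by apply: K2.
apply: ME_cat => //; exact: Kl.
Qed.

Lemma eqv_ME n u w : fvb_eqv n u w -> ME u w.
Proof.
elim => {u w}.
- by [].
- by move=> u v _ H x; apply: E_sym.
- by move=> u v w _ H1 _ H2 x; apply: E_trans (H1 x) (H2 x).
- move=> a b u v _ _ _ H; apply: ME_cat => //; apply: ME_cat => //.
- by move=> x _; apply: K2.
- move=> u v []; clear.
  + move=> i j _ _ H x; exact: rel_ss_ok.
  + move=> i j _ _ H x; exact: rel_rr_ok.
  + move=> i j _ _ H x; exact: rel_sr_ok.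
  + move=> i _ x; exact: rel_sss_ok.
  + move=> i _ x; exact: rel_rrr_ok.
  + move=> i _ x; exact: rel_rrs_ok.
  + by move=> i _; apply: K2.
  + by move=> i _; apply: K2.
Qed.

Lemma inN_K n w : inN n w -> K w.
Proof.
elim => {w}.
- move=> i /andP[Hi _] v; exact: relator_ker.
- exact: K_nil.
- by move=> u v _ Hu _ Hv; apply: ME_K (Kl _ Hu) Hv.
- move=> u _ Hu; apply: ME_K (Kcancel u); apply: ME_sym; exact: Kl.
- move=> g u _ _ Hu; apply: ME_K (Kcancel g); apply: ME_cat => //; exact: Kl.
- by move=> u v /eqv_ME H _ Hu x; apply: E_trans (E_sym (H x)) (Hu x).
Qed.


Definition tau (i j : nat) := if j == i then i.+1 else if j == i.+1 then i else j.

Fixpoint px (w : word) (j : nat) : nat :=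
  match w with [::] => j | a :: w => px w (tau a.2.2 j) end.
Fixpoint py (w : word) (j : nat) : nat :=
  match w with [::] => j | a :: w => py w (if a.2.1 then tau a.2.2 j else j) end.

Lemma thetaY w k : theta w (true, k) = [:: (false, (true, py w k))].
Proof.
elim: w k => [|a w IH] k //.
rewrite theta_cons /=.
have -> : theta_letter a (true, k) = [:: (false, (true, if a.2.1 then tau a.2.2 k else k))].
  case: a => s [[] i]; rewrite /theta_letter /theta_gen /theta_rho /theta_sigma /tau /=;
  by repeat case: ifP.
by rewrite fsubst_cons /= cats0 IH.
Qed.

Definition isY (l : fletter) : bool := l.2.1.

Lemma allY_fsubst w u : all isY u -> all isY (fsubst (theta w) u).
Proof.
elim: u => [|[s [c k]] u IH] //= /andP[Hc Hu].
rewrite fsubst_cons all_cat IH // andbT /=.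
case: c Hc => // _.
by rewrite thetaY; case: s.
Qed.

Definition shape m (u : fword) := exists ys1 ys2,
  [/\ all isY ys1, all isY ys2 & u = ys1 ++ X m :: ys2].

Lemma thetaX w k : shape (px w k) (theta w (false, k)).
Proof.
elim: w k => [|a w IH] k.
  by exists [::], [::].
rewrite theta_cons /=.
have [ys1 [ys2 [H1 H2 ->]]] : shape (tau a.2.2 k) (theta_letter a (false, k)).
  case: a => s [[] i]; rewrite /theta_letter /theta_gen /theta_rho /theta_sigma /tau /=.
  + case: ifP => _; first by exists [::], [::].
    case: ifP => _; first by exists [::], [::].
    by exists [::], [::].
  + case: ifP => _; first by exists [::], [:: Y i.+1].
    case: ifP => _; first by exists [::], [:: Yinv i.+1].
    by exists [::], [::].
rewrite fsubst_cat fsubst_cons /=.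
have [zs1 [zs2 [G1 G2 ->]]] := IH (tau a.2.2 k).
exists (fsubst (theta w) ys1 ++ zs1), (zs2 ++ fsubst (theta w) ys2).
by rewrite !all_cat G1 G2 !allY_fsubst // -!catA.
Qed.

Lemma odd_count_fred (P : fletter -> bool) u :
  (forall a b, a.2 = b.2 -> P a = P b) ->
  odd (count P (fred u)) = odd (count P u).
Proof.
move=> HP; elim: u => [|a u IH] //.
rewrite fred_cons [count _ (a :: u)]/= oddD -IH.
case: (fred u) => [|b r]; first by rewrite /= addn0 addbF.
rewrite /fpush.
case: ifP => [/andP[/eqP H _]|_] /=; last by rewrite oddD.
by rewrite (HP _ _ H) oddD addbA addbb.
Qed.

Lemma ker_px w j : fred (theta w (false, j)) = [:: (false, (false, j))] -> px w j = j.
Proof.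
have [ys1 [ys2 [H1 H2 E]]] := thetaX w j.
set P := fun l : fletter => l.2 == (false, px w j).
have HP : forall a b : fletter, a.2 = b.2 -> P a = P b by move=> a b; rewrite /P => ->.
move=> H.
have := odd_count_fred (theta w (false, j)) HP; rewrite H E count_cat /=.
have C1 : forall ys, all isY ys -> count P ys = 0.
  elim=> [|[s [c k]] ys IHy] //= /andP[Hc Hy]; rewrite IHy // addn0.
  by case: c Hc.
rewrite (C1 _ H1) (C1 _ H2) /P /= eqxx /= addn0.
by rewrite xpair_eqE /=; case: eqP.
Qed.

Lemma transp_val n i (x : 'I_n) : 1 <= i <= n.-1 ->
  (val (transp n i x)).+1 = tau i (val x).+1.
Proof.
move=> Hi; rewrite /transp.
case: insubP => [a Ha Ea|/negP H]; last by exfalso; apply: H; lia.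
case: insubP => [b Hb Eb|/negP H]; last by exfalso; apply: H; lia.
rewrite /tau.
case: tpermP => [->|->|H1 H2].
- by rewrite Eb Ea; repeat case: eqP; lia.
- by rewrite Eb Ea; repeat case: eqP; lia.
have H1' : val x != i.-1 by apply/eqP => E; apply: H1; apply: val_inj; rewrite /= Ea.
have H2' : val x != i by apply/eqP => E; apply: H2; apply: val_inj; rewrite /= Eb.
repeat case: eqP => ? //; lia.
Qed.

Lemma transp_inv n i : (transp n i)^-1%g = transp n i.
Proof.
rewrite /transp; case: insub => [a|]; last by rewrite invg1.
case: insub => [b|]; last by rewrite invg1.
by rewrite tpermV.
Qed.

Lemma iota1_val n w (x : 'I_n) : valid n w ->
  (val (iota1 n w x)).+1 = px w (val x).+1.
Proof.
elim: w x => [|a w IH] x; first by rewrite /iota1 /= perm1.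
rewrite /valid /= => /andP[Ha Hw].
rewrite /iota1 /= -/(iota1 n w) permM.
have -> : (if a.1 then (gen_perm1 n a.2)^-1 else gen_perm1 n a.2)%g = transp n a.2.2.
  by rewrite /gen_perm1; case: a.1; rewrite ?transp_inv.
by rewrite (IH _ Hw) transp_val.
Qed.

Lemma iota2_val n w (x : 'I_n) : valid n w ->
  (val (iota2 n w x)).+1 = py w (val x).+1.
Proof.
elim: w x => [|a w IH] x; first by rewrite /iota2 /= perm1.
rewrite /valid /= => /andP[Ha Hw].
rewrite /iota2 /= -/(iota2 n w) permM.
rewrite /gen_perm2; case: a Ha => s [[] i] Ha /=.
  have -> : (if s then (transp n i)^-1 else transp n i)%g = transp n i.
    by case: (s); rewrite ?transp_inv.
  by rewrite (IH _ Hw) transp_val.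
have -> : (if s then (1 : {perm 'I_n})^-1 else 1)%g = 1%g.
  by case: (s); rewrite ?invg1.
by rewrite perm1 (IH _ Hw).
Qed.


Unset Implicit Arguments. Set Strict Implicit.

Theorem corollary1 (n : nat) : 3 <= n ->
  (forall w : word, valid n w -> inN n w -> in_ker_theta n w) /\
  (forall w : word, valid n w -> in_ker_theta n w ->
     iota1 n w = 1%g /\ iota2 n w = 1%g).
Proof.
move=> Hn; split.
  move=> w _ HN b j _.
  by rewrite (inN_K HN (b, j)).
move=> w Hw Hk; split; apply/permP => x; rewrite perm1; apply: val_inj; apply: succn_inj.
  rewrite iota1_val // ker_px //; apply: Hk.
  by rewrite /= ltn_ord.
rewrite iota2_val //.
have : 1 <= (val x).+1 <= n by rewrite /= ltn_ord.
move/(Hk true); rewrite thetaY /=.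
by case.
Qed.
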